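(* Let $A$ be an algebra in a semidegenerate congruence modular variety $\mathcal{V}$ such that $K(A)$ is closed under the commutator. The following are equivalent: (1) the map $\lambda_A|_{B(Con(A))}: B(Con(A))\rightarrow B(L(A))$ is a Boolean isomorphism; (2) the map $\lambda_A|_{B(Con(A))}: B(Con(A))\rightarrow B(L(A))$ is surjective; (3) for every $\alpha\in K(A)$, if $\lambda_A(\alpha)\in B(L(A))$ then there exists an integer $n\geq 0$ with $[\alpha,\alpha]^n\in B(Con(A))$; (4) for every $\alpha\in K(A)$, $\lambda_A(\alpha)\in B(L(A))$ if and only if there exists an integer $n\geq 0$ with $[\alpha,\alpha]^n\in B(Con(A))$.
   Context: $\mathcal{V}$ is a variety of algebras of a finite signature which is congruence modular and semidegenerate (no nontrivial algebra of $\mathcal{V}$ has a one-element subalgebra; equivalently $\nabla_A$ is compact for all $A\in\mathcal{V}$). $Con(A)$ is the congruence lattice of $A$ with bounds $\Delta_A,\nabla_A$; $[\cdot,\cdot]$ is the Freese–McKenzie commutator on $Con(A)$; $K(A)$ is the set of compact (finitely generated) congruences. $[\alpha,\alpha]^0=\alpha$, $[\alpha,\alpha]^{n+1}=[[\alpha,\alpha]^n,[\alpha,\alpha]^n]$. A congruence $\phi\neq\nabla_A$ is prime if $[\alpha,\beta]\subseteq\phi$ implies $\alpha\subseteq\phi$ or $\beta\subseteq\phi$; for $\theta\in Con(A)$, $\rho(\theta)$ is the intersection of all prime congruences containing $\theta$. The reticulation $L(A)$ is the bounded distributive lattice $K(A)/{\equiv}$, where $\alpha\equiv\beta$ iff $\rho(\alpha)=\rho(\beta)$,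 and $\lambda_A:K(A)\to L(A)$ is the canonical map (it satisfies $\lambda_A(\alpha\vee\beta)=\lambda_A(\alpha)\vee\lambda_A(\beta)$, $\lambda_A([\alpha,\beta])=\lambda_A(\alpha\cap\beta)=\lambda_A(\alpha)\wedge\lambda_A(\beta)$). $B(Con(A))$ is the Boolean algebra of complemented elements of the lattice $Con(A)$ and $B(L(A))$ that of $L(A)$; it is known that $B(Con(A))\subseteq K(A)$ and $\lambda_A$ maps $B(Con(A))$ into $B(L(A))$ as an injective Boolean morphism. *)

(* Defs.v *)
From Stdlib Require Import List.
From mathcomp Require Import all_boot.
Set Implicit Arguments. Unset Strict Implicit. Unset Printing Implicit Defensive.

Record signature := Signature { sop : finType; sarity : sop -> nat }.

Record algebra (S : signature) := Algebra {
  carrier :> Type;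
  interp : forall o : sop S, ('I_(sarity o) -> carrier) -> carrier }.

Arguments interp {S B} o _ : rename.

Inductive term (S : signature) : Type :=
  | Var : nat -> term S
  | App : forall o : sop S, ('I_(sarity o) -> term S) -> term S.

Fixpoint eval (S : signature) (B : algebra S) (e : nat -> B) (t : term S) : B :=
  match t with
  | Var n => e n
  | App o ts => interp (B:=B) o (fun i => eval e (ts i))
  end.

(* A variety is the class of models of a set Sigma of identities (Birkhoff). *)
Definition inV (S : signature) (Sigma : term S -> term S -> Prop) (B : algebra S) : Prop :=
  forall t u, Sigma t u -> forall e : nat -> B, eval e t = eval e u.

Definition prel (T : Type) := T -> T -> Prop.
Definition subrel T (R R' : prel T) : Prop := forall x y, R x y -> R' x y.
Definition releq T (R R' : prel T) : Prop := forall x y, R x y <-> R' x y.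

Definition is_con (S : signature) (B : algebra S) (R : prel B) : Prop :=
  (forall x, R x x) /\ (forall x y, R x y -> R y x) /\
  (forall x y z, R x y -> R y z -> R x z) /\
  (forall (o : sop S) (a b : 'I_(sarity o) -> B),
      (forall i, R (a i) (b i)) -> R (interp o a) (interp o b)).

Definition Delta T : prel T := fun x y => x = y.
Definition Nabla T : prel T := fun _ _ => True.

Definition Cg (S : signature) (B : algebra S) (X : prel B) : prel B :=
  fun x y => forall th : prel B, is_con th -> subrel X th -> th x y.

Definition con_meet T (a b : prel T) : prel T := fun x y => a x y /\ b x y.
Definition con_join (S : signature) (B : algebra S) (a b : prel B) : prel B :=
  Cg (fun x y => a x y \/ b x y).

Definition compact (S : signature) (B : algebra S) (a : prel B) : Prop :=
  exists l : list (B * B), releq a (Cg (fun x y => In (x, y) l)).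

Definition mix T (m : nat) (a c : nat -> T) : nat -> T :=
  fun i => if i < m then a i else c i.

Definition centralizes (S : signature) (B : algebra S) (a b g : prel B) : Prop :=
  forall (t : term S) (m : nat) (x y u v : nat -> B),
    (forall i, a (x i) (y i)) -> (forall i, b (u i) (v i)) ->
    g (eval (mix m x u) t) (eval (mix m x v) t) ->
    g (eval (mix m y u) t) (eval (mix m y v) t).

(* [a, b] = least congruence g with C(a, b; g)  (in a congruence modular
   variety this is the Freese--McKenzie commutator) *)
Definition comm (S : signature) (B : algebra S) (a b : prel B) : prel B :=
  fun x y => forall g : prel B, is_con g -> centralizes a b g -> g x y.

Fixpoint comm_iter (S : signature) (B : algebra S) (n : nat) (a : prel B) : prel B :=
  match n with
  | 0 => a
  | n'.+1 => let c := comm_iter n' a in comm c c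
  end.

Definition con_modular_variety (S : signature) (Sigma : term S -> term S -> Prop) : Prop :=
  forall B : algebra S, inV Sigma B ->
  forall a b c : prel B, is_con a -> is_con b -> is_con c -> subrel a c ->
    releq (con_join a (con_meet b c)) (con_meet (con_join a b) c).

Definition semidegenerate (S : signature) (Sigma : term S -> term S -> Prop) : Prop :=
  forall B : algebra S, inV Sigma B -> (exists x y : B, x <> y) ->
    ~ (exists b : B, forall o : sop S, interp o (fun _ => b) = b).

Definition prime_con (S : signature) (B : algebra S) (p : prel B) : Prop :=
  is_con p /\ ~ releq p (@Nabla B) /\
  forall a b : prel B, is_con a -> is_con b -> subrel (comm a b) p ->
    subrel a p \/ subrel b p.

Definition rho (S : signature) (B : algebra S) (th : prel B) : prel B :=
  fun x y => forall p : prel B, prime_con p -> subrel th p -> p x y.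

(* The reticulation L(A) = K(A)/==, with a == b iff rho a = rho b.
   Elements of L(A) are represented by compact congruences, compared with Leq;
   lambda_A is the canonical map (identity on representatives). *)
Definition Leq (S : signature) (B : algebra S) (a b : prel B) : Prop :=
  releq (rho a) (rho b).
Definition lam (S : signature) (B : algebra S) (a : prel B) : prel B := a.
Definition Ljoin (S : signature) (B : algebra S) (a b : prel B) : prel B := con_join a b.
Definition Lmeet (S : signature) (B : algebra S) (a b : prel B) : prel B := comm a b.
Definition Ltop (S : signature) (B : algebra S) : prel B := @Nabla B.
Definition Lbot (S : signature) (B : algebra S) : prel B := @Delta B.

Definition in_BL (S : signature) (B : algebra S) (x : prel B) : Prop :=
  exists y : prel B, is_con y /\ compact y /\
    Leq (Ljoin x y) (@Ltop S B) /\ Leq (Lmeet x y) (@Lbot S B).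

Definition in_BCon (S : signature) (B : algebra S) (a : prel B) : Prop :=
  is_con a /\ exists b : prel B, is_con b /\
    releq (con_join a b) (@Nabla B) /\ releq (con_meet a b) (@Delta B).

Definition lamB_surjective (S : signature) (B : algebra S) : Prop :=
  forall x : prel B, is_con x -> compact x -> in_BL (lam x) ->
    exists a : prel B, in_BCon a /\ Leq (lam a) (lam x).

Definition lamB_boolean_iso (S : signature) (B : algebra S) : Prop :=
  (forall a : prel B, in_BCon a -> compact a /\ in_BL (lam a)) /\
  (* bounded lattice morphism (hence Boolean morphism) *)
  (forall a b : prel B, in_BCon a -> in_BCon b ->
     Leq (lam (con_join a b)) (Ljoin (lam a) (lam b)) /\
     Leq (lam (con_meet a b)) (Lmeet (lam a) (lam b))) /\
  Leq (lam (@Delta B)) (@Lbot S B) /\ Leq (lam (@Nabla B)) (@Ltop S B) /\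
  (forall a b : prel B, in_BCon a -> in_BCon b -> Leq (lam a) (lam b) -> releq a b) /\
  @lamB_surjective S B.

(* Main.v *)
Require Import Defs.
From mathcomp Require Import all_boot.
From mathcomp Require Import zify.
From Stdlib Require Import FunctionalExtensionality ProofIrrelevance Classical IndefiniteDescription PropExtensionality.
From Stdlib Require List.
From mathcomp Require boolp classical_sets.
Import Defs.
Set Implicit Arguments. Unset Strict Implicit. Unset Printing Implicit Defensive.


Lemma Cg_con (S : signature) (B : algebra S) (X : prel B) : is_con (Cg X).
Proof.
split; [|split; [|split]].
- by move=> x th [h _].
- by move=> x y H th hth hX; case: (hth) => _ [hs _]; apply: hs; apply: H.
- by move=> x y z H1 H2 th hth hX; case: (hth) => _ [_ [ht _]]; apply: (ht _ y); [apply: H1|apply: H2].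
- move=> o a b H th hth hX; case: (hth) => _ [_ [_ hc]]; apply: hc => i; exact: H.
Qed.

Lemma Cg_incl (S : signature) (B : algebra S) (X : prel B) : subrel X (Cg X).
Proof. by move=> x y H th _ hX; apply: hX. Qed.

Lemma Cg_min (S : signature) (B : algebra S) (X th : prel B) :
  is_con th -> subrel X th -> subrel (Cg X) th.
Proof. by move=> h1 h2 x y H; apply: H. Qed.

Lemma Cg_mono (S : signature) (B : algebra S) (X Y : prel B) :
  subrel X Y -> subrel (Cg X) (Cg Y).
Proof.
move=> h; apply: Cg_min; first exact: Cg_con.
by move=> x y /h; apply: Cg_incl.
Qed.

Section ConFacts.
Variables (S : signature) (B : algebra S) (th : prel B) (h : is_con th).
Lemma con_refl x : th x x. Proof. by case: h => H _; apply: H. Qed.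
Lemma con_sym x y : th x y -> th y x. Proof. by case: h => _ [H _]; apply: H. Qed.
Lemma con_trans x y z : th x y -> th y z -> th x z. Proof. by case: h => _ [_ [H _]]; apply: H. Qed.
Lemma con_comp o (a b : 'I_(sarity o) -> B) : (forall i, th (a i) (b i)) -> th (interp o a) (interp o b).
Proof. by case: h => _ [_ [_ H]]; apply: H. Qed.
End ConFacts.

Lemma eval_ext (S : signature) (B : algebra S) (e e' : nat -> B) t :
  (forall i, e i = e' i) -> eval e t = eval e' t.
Proof. by move=> H; have -> : e = e' by apply: functional_extensionality. Qed.

Lemma eval_con (S : signature) (B : algebra S) (th : prel B) (e e' : nat -> B) t :
  is_con th -> (forall i, th (e i) (e' i)) -> th (eval e t) (eval e' t).
Proof.
move=> hc H; elim: t => [n|o ts IH] /=; first exact: H.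
by apply: con_comp.
Qed.

Lemma Delta_con (S : signature) (B : algebra S) : is_con (@Delta B).
Proof.
rewrite /Delta; split; [|split; [|split]].
- by [].
- by [].
- by move=> x y z -> ->.
- by move=> o a b H; have -> : a = b by apply: functional_extensionality.
Qed.

Lemma Nabla_con (S : signature) (B : algebra S) : is_con (@Nabla B).
Proof. by split; [|split; [|split]]. Qed.

Lemma meet_con (S : signature) (B : algebra S) (a b : prel B) :
  is_con a -> is_con b -> is_con (con_meet a b).
Proof.
move=> ha hb; split; [|split; [|split]].
- by move=> x; split; apply: con_refl.
- by move=> x y [] ? ?; split; apply: con_sym.
- by move=> x y z [] ? ? [] ? ?; split; [apply: (con_trans ha) | apply: (con_trans hb)]; eauto.
- by move=> o x y H; split; apply: con_comp => // i; case: (H i).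
Qed.

Lemma join_con (S : signature) (B : algebra S) (a b : prel B) : is_con (con_join a b).
Proof. exact: Cg_con. Qed.

Lemma join_l (S : signature) (B : algebra S) (a b : prel B) : subrel a (con_join a b).
Proof. by move=> x y H; apply: Cg_incl; left. Qed.
Lemma join_r (S : signature) (B : algebra S) (a b : prel B) : subrel b (con_join a b).
Proof. by move=> x y H; apply: Cg_incl; right. Qed.
Lemma join_min (S : signature) (B : algebra S) (a b c : prel B) :
  is_con c -> subrel a c -> subrel b c -> subrel (con_join a b) c.
Proof. by move=> hc ha hb; apply: Cg_min => // x y [/ha|/hb]. Qed.
Lemma join_mono (S : signature) (B : algebra S) (a b a' b' : prel B) :
  subrel a a' -> subrel b b' -> subrel (con_join a b) (con_join a' b').
Proof.
move=> h1 h2; apply: join_min; first exact: join_con.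
- by move=> x y /h1; apply: join_l.
- by move=> x y /h2; apply: join_r.
Qed.
Lemma join_comm (S : signature) (B : algebra S) (a b : prel B) :
  subrel (con_join a b) (con_join b a).
Proof. apply: join_min; [exact: join_con|exact: join_r|exact: join_l]. Qed.


Section Comm.
Variables (S : signature) (B : algebra S).
Implicit Types a b g : prel B.

Lemma comm_con a b : is_con (comm a b).
Proof.
split; [|split; [|split]].
- by move=> x g hg _; apply: con_refl.
- by move=> x y H g hg hc; apply: con_sym => //; apply: H.
- by move=> x y z H1 H2 g hg hc; apply: (con_trans hg (H1 g hg hc) (H2 g hg hc)).
- by move=> o x y H g hg hc; apply: con_comp => // i; apply: H.
Qed.

Lemma comm_cent a b : centralizes a b (comm a b).
Proof. by move=> t m x y u v hx hu H g hg hc; apply: (hc t m x y u v) => //; apply: H. Qed.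

Lemma comm_min a b g : is_con g -> centralizes a b g -> subrel (comm a b) g.
Proof. by move=> hg hc x y H; apply: H. Qed.

Lemma cent_left_self g b : is_con g -> centralizes g b g.
Proof.
move=> hg t m x y u v hx hu H.
apply: (con_trans hg _ (con_trans hg H _)).
- apply: eval_con => // i; rewrite /mix; case: ifP => _; last exact: con_refl.
  by apply: con_sym.
- apply: eval_con => // i; rewrite /mix; case: ifP => _; last exact: con_refl.
  by [].
Qed.

Lemma cent_right_self a g : is_con g -> centralizes a g g.
Proof.
move=> hg t m x y u v hx hu H.
apply: eval_con => // i; rewrite /mix; case: ifP => _; last exact: hu.
exact: con_refl.
Qed.

Lemma comm_le_l a b : is_con a -> subrel (comm a b) a.
Proof. by move=> ha; apply: comm_min => //; apply: cent_left_self. Qed.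
Lemma comm_le_r a b : is_con b -> subrel (comm a b) b.
Proof. by move=> hb; apply: comm_min => //; apply: cent_right_self. Qed.

Lemma cent_mono a b a' b' g : subrel a' a -> subrel b' b -> centralizes a b g -> centralizes a' b' g.
Proof. by move=> h1 h2 hc t m x y u v hx hu; apply: hc => i; [apply: h1|apply: h2]. Qed.

Lemma comm_mono a b a' b' : subrel a' a -> subrel b' b -> subrel (comm a' b') (comm a b).
Proof. by move=> h1 h2 x y H g hg hc; apply: H => //; apply: cent_mono hc. Qed.

Lemma comm_iter_con n a : is_con a -> is_con (comm_iter n a).
Proof. by move=> ha; case: n => [|n] //=; apply: comm_con. Qed.

Lemma comm_iter_le n a : is_con a -> subrel (comm_iter n.+1 a) (comm_iter n a).
Proof. by move=> ha /=; apply: comm_le_l; apply: comm_iter_con. Qed.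

Lemma comm_iter_anti n m a : is_con a -> n <= m -> subrel (comm_iter m a) (comm_iter n a).
Proof.
move=> ha; elim: m => [|m IH]; first by rewrite leqn0 => /eqP ->.
rewrite leq_eqVlt => /orP [/eqP -> //|]; rewrite ltnS => /IH h x y H.
by apply: h; apply: comm_iter_le.
Qed.

Lemma comm_iter_mono n a b : subrel a b -> subrel (comm_iter n a) (comm_iter n b).
Proof. by elim: n => [|n IH] //= h; apply: comm_mono; apply: IH. Qed.

Lemma comm_iter_compact n a :
  (forall a b : prel B, is_con a -> is_con b -> compact a -> compact b -> compact (comm a b)) ->
  is_con a -> compact a -> compact (comm_iter n a).
Proof.
move=> hK ha hc; elim: n => [|n IH] //=.
by apply: hK => //; apply: comm_iter_con.
Qed.

Lemma rho_incl a : subrel a (rho a).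
Proof. by move=> x y H p _ hp; apply: hp. Qed.
Lemma rho_mono a b : subrel a b -> subrel (rho a) (rho b).
Proof. by move=> h x y H p hp hb; apply: H => // u v /h; apply: hb. Qed.
Lemma rho_releq a b : releq a b -> releq (rho a) (rho b).
Proof. by move=> h x y; split; apply: rho_mono => u v /h. Qed.

Lemma rho_comm_meet a b : is_con a -> is_con b -> releq (rho (comm a b)) (rho (con_meet a b)).
Proof.
move=> ha hb x y; split.
- apply: rho_mono => u v H; split; [exact: comm_le_l H|exact: comm_le_r H].
- move=> H p hp hc; apply: H => //.
  case: (hp) => _ [_ hpr]; case: (hpr a b ha hb hc) => h u v [hu hv]; by apply: h.
Qed.

Lemma rho_meet a b : is_con a -> is_con b -> releq (rho (con_meet a b)) (con_meet (rho a) (rho b)).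
Proof.
move=> ha hb x y; split.
- by move=> H; split; move: H; apply: rho_mono => u v [].
- move=> [H1 H2] p hp hc.
  case: (hp) => _ [_ hpr].
  have: subrel (comm a b) p.
    by move=> u v huv; apply: hc; split; [exact: comm_le_l huv|exact: comm_le_r huv].
  by case/(hpr a b ha hb) => h; [apply: H1|apply: H2].
Qed.

Lemma rho_comm_self a : is_con a -> releq (rho (comm a a)) (rho a).
Proof.
move=> ha x y; split.
- by apply: rho_mono; apply: comm_le_l.
- move=> H p hp hc; apply: H => //.
  by case: (hp) => _ [_ hpr]; case: (hpr a a ha ha hc).
Qed.

Lemma rho_iter n a : is_con a -> releq (rho (comm_iter n a)) (rho a).
Proof.
move=> ha; elim: n => [|n IH] //= x y.
rewrite -IH; apply: rho_comm_self; exact: comm_iter_con.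
Qed.

Lemma rho_Nabla x y : rho (@Nabla B) x y.
Proof. by move=> p [_ [hn _]] hs; exfalso; apply: hn => u v; split => // _; apply: hs. Qed.

End Comm.


Definition compat (S : signature) (B : algebra S) (th : prel B) :=
  forall o (a b : 'I_(sarity o) -> B), (forall i, th (a i) (b i)) -> th (interp o a) (interp o b).

Lemma con_compat (S : signature) (B : algebra S) (th : prel B) : is_con th -> compat th.
Proof. by move=> h o a b; apply: con_comp. Qed.

Lemma sig_eq (T : Type) (P : T -> Prop) (p q : {x : T | P x}) : proj1_sig p = proj1_sig q -> p = q.
Proof. by case: p => x hx; case: q => y hy /= E; subst y; f_equal; apply: proof_irrelevance. Qed.

Section Sub2.
Variables (S : signature) (B : algebra S) (th : prel B) (hth : compat th).

Definition sub2_car := {p : B * B | th p.1 p.2}.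
Definition sub2_op (o : sop S) (args : 'I_(sarity o) -> sub2_car) : sub2_car :=
  exist _ (interp o (fun i => (proj1_sig (args i)).1), interp o (fun i => (proj1_sig (args i)).2))
    (hth (fun i => proj2_sig (args i))).
Definition sub2 : algebra S := @Algebra S sub2_car sub2_op.

Definition pr1 (p : sub2) : B := (proj1_sig p).1.
Definition pr2 (p : sub2) : B := (proj1_sig p).2.

Lemma pr1_op o (args : 'I_(sarity o) -> sub2) : pr1 (interp o args) = interp o (fun i => pr1 (args i)).
Proof. by []. Qed.
Lemma pr2_op o (args : 'I_(sarity o) -> sub2) : pr2 (interp o args) = interp o (fun i => pr2 (args i)).
Proof. by []. Qed.

Lemma sub2_eq (p q : sub2) : pr1 p = pr1 q -> pr2 p = pr2 q -> p = q.
Proof.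
move=> h1 h2; apply: sig_eq; move: h1 h2; rewrite /pr1 /pr2.
by case: (proj1_sig p) => ? ?; case: (proj1_sig q) => ? ? /= -> ->.
Qed.

Lemma eval_pr1 (e : nat -> sub2) t : pr1 (eval e t) = eval (fun i => pr1 (e i)) t.
Proof.
elim: t => [n|o ts IH] //=; rewrite pr1_op; f_equal.
by apply: functional_extensionality => i; apply: IH.
Qed.
Lemma eval_pr2 (e : nat -> sub2) t : pr2 (eval e t) = eval (fun i => pr2 (e i)) t.
Proof.
elim: t => [n|o ts IH] //=; rewrite pr2_op; f_equal.
by apply: functional_extensionality => i; apply: IH.
Qed.

Lemma inV_sub2 Sigma : inV Sigma B -> inV Sigma sub2.
Proof.
move=> hB t u hs e; apply: sub2_eq; [rewrite !eval_pr1 | rewrite !eval_pr2]; exact: hB.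
Qed.

Definition mk2 (x y : B) (h : th x y) : sub2 := exist _ (x, y) h.
End Sub2.

Lemma pull_con (S : signature) (R B : algebra S) (f : R -> B) (th : prel B) :
  (forall o (args : 'I_(sarity o) -> R), f (interp o args) = interp o (fun i => f (args i))) ->
  is_con th -> is_con (fun p q => th (f p) (f q)).
Proof.
move=> hf hth; split; [|split; [|split]].
- by move=> x; apply: con_refl.
- by move=> x y; apply: con_sym.
- by move=> x y z; apply: con_trans.
- by move=> o a b H; rewrite !hf; apply: con_comp.
Qed.

Section Quot.
Variables (S : signature) (B : algebra S) (th : prel B) (hth : is_con th).

Definition qcar := {P : B -> Prop | exists x, P = th x}.
Definition qrep (q : qcar) : B := proj1_sig (constructive_indefinite_description _ (proj2_sig q)).
Lemma qrep_spec q : proj1_sig q = th (qrep q).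
Proof. by rewrite /qrep; case: (constructive_indefinite_description _ _). Qed.
Definition qcls (x : B) : qcar := exist _ (th x) (ex_intro _ x erefl).
Lemma qcls_eq x y : th x y -> qcls x = qcls y.
Proof.
move=> h; apply: sig_eq => /=; apply: functional_extensionality => z.
apply: propositional_extensionality; split => H.
- by apply: (con_trans hth (con_sym hth h)).
- by apply: (con_trans hth h).
Qed.
Lemma qcls_inj x y : qcls x = qcls y -> th x y.
Proof. by move=> /(f_equal (@proj1_sig _ _)) /= E; rewrite E; apply: con_refl. Qed.
Lemma qcls_rep q : qcls (qrep q) = q.
Proof. by apply: sig_eq => /=; rewrite qrep_spec. Qed.
Lemma qrep_cls x : th (qrep (qcls x)) x.
Proof.
have := qrep_spec (qcls x) => /= E.
apply: con_sym => //; rewrite E; apply: con_refl => //.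
Qed.

Definition quot : algebra S :=
  @Algebra S qcar (fun o args => qcls (interp o (fun i => qrep (args i)))).

Lemma eval_quot (e : nat -> quot) t : eval e t = qcls (eval (fun n => qrep (e n)) t).
Proof.
elim: t => [n|o ts IH] /=; first by rewrite qcls_rep.
apply: qcls_eq; apply: con_comp => // i; rewrite IH; exact: qrep_cls.
Qed.

Lemma inV_quot Sigma : inV Sigma B -> inV Sigma quot.
Proof. by move=> hB t u hs e; rewrite !eval_quot (hB t u hs). Qed.
End Quot.

Lemma sd_quot (S : signature) (Sigma : term S -> term S -> Prop) (B : algebra S) (th : prel B) :
  semidegenerate Sigma -> inV Sigma B -> is_con th ->
  forall b : B, (forall o, th (interp o (fun _ => b)) b) -> forall x y, th x y.
Proof.
move=> hsd hB hth b hb x y.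
have hQ := inV_quot hth hB.
have hid : exists q : quot th, forall o, interp o (fun _ => q) = q.
  exists (qcls th b) => o /=; apply: qcls_eq => //.
  apply: (con_trans hth _ (hb o)); apply: con_comp => // i; exact: qrep_cls.
apply: qcls_inj => //; apply: NNPP => hne.
by apply: (hsd _ hQ) => //; exists (qcls th x), (qcls th y).
Qed.

Section Prod.
Variables (S : signature) (I : Type) (B : algebra S).
Definition prodA : algebra S :=
  @Algebra S (I -> B) (fun o args => fun l => interp o (fun i => args i l)).
Lemma eval_prod (e : nat -> prodA) t l : eval e t l = eval (fun n => e n l) t.
Proof.
elim: t => [n|o ts IH] //=; f_equal.
by apply: functional_extensionality => i; apply: IH.
Qed.
Lemma inV_prod Sigma : inV Sigma B -> inV Sigma prodA.
Proof.
move=> hB t u hs e; apply: functional_extensionality => l.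
by rewrite !eval_prod; apply: hB.
Qed.
End Prod.


Definition upd0 (T : Type) (e : nat -> T) (z : T) : nat -> T :=
  fun i => if i is 0 then z else e i.

Fixpoint tsubst (S : signature) (s : nat -> term S) (t : term S) : term S :=
  match t with
  | Var n => s n
  | App o ts => @App S o (fun i => tsubst s (ts i))
  end.

Lemma eval_tsubst (S : signature) (B : algebra S) (e : nat -> B) s t :
  eval e (tsubst s t) = eval (fun n => eval e (s n)) t.
Proof.
elim: t => [n|o ts IH] //=; f_equal.
by apply: functional_extensionality => i; apply: IH.
Qed.

Definition Sat (T : Type) (th : T -> T -> Prop) (P : T -> Prop) :=
  forall x y, th x y -> (P x <-> P y).

Section CgSat.
Variables (S : signature) (B : algebra S) (P : B -> Prop).

Definition PolQ (x y : B) := forall t (e : nat -> B), P (eval (upd0 e x) t) <-> P (eval (upd0 e y) t).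

Lemma PolQ_step o (j : 'I_(sarity o)) (d : 'I_(sarity o) -> B) x y : PolQ x y ->
  PolQ (interp o (fun i => if i == j then x else d i)) (interp o (fun i => if i == j then y else d i)).
Proof.
move=> H t e.
set n := sarity o.
pose C : term S := @App S o (fun i : 'I_n => if i == j then Var S 0 else Var S (nat_of_ord i).+1).
pose s : nat -> term S := fun k => if k is 0 then C else Var S (k + n).
pose e' : nat -> B := fun m => if m < n.+1 then d (insubd j m.-1) else e (m - n).
have key : forall z, eval (upd0 e' z) (tsubst s t) = eval (upd0 e (interp o (fun i => if i == j then z else d i))) t.
  move=> z; rewrite eval_tsubst; apply: eval_ext => -[|k] /=.
  - f_equal; apply: functional_extensionality => i; case: eqP => // _ /=.
    rewrite /e' ltnS ltn_ord /=; f_equal; apply: val_inj; rewrite /= insubdK //; exact: ltn_ord.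
  - rewrite /e' /=.
    have -> : (k.+1 + n < n.+1) = false by lia.
    by have -> : k.+1 + n - n = k.+1 by lia.
rewrite -!key; exact: H.
Qed.

Lemma PolQ_con : is_con PolQ.
Proof.
split; [|split; [|split]].
- by move=> x t e.
- by move=> x y H t e; split => h; apply/(H t e).
- by move=> x y z H1 H2 t e; split => h; [apply/(H2 t e)/(H1 t e) | apply/(H1 t e)/(H2 t e)].
- move=> o a b H.
  set n := sarity o.
  pose c (j : nat) := interp o (fun i : 'I_n => if i < j then b i else a i).
  have step : forall j, j <= n -> PolQ (interp o a) (c j).
    elim => [|j IH] hj.
    + have -> : c 0 = interp o a by rewrite /c; f_equal; apply: functional_extensionality.
      by move=> t e.
    + have hjn : j < n by [].
      pose jj : 'I_n := Ordinal hjn.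
      pose d := fun i : 'I_n => if i < j then b i else a i.
      have E1 : c j = interp o (fun i => if i == jj then a jj else d i).
        rewrite /c; f_equal; apply: functional_extensionality => i.
        case: eqP => [->|]; rewrite /d //= ltnn //.
      have E2 : c j.+1 = interp o (fun i => if i == jj then b jj else d i).
        rewrite /c; f_equal; apply: functional_extensionality => i.
        case: eqP => [->|hne]; rewrite /d /= ?ltnSn //.
        rewrite ltnS leq_eqVlt; case: eqP => //= hij; exfalso; apply: hne.
        by apply: val_inj.
      have IH' := IH (ltnW hjn).
      have hs := PolQ_step jj d (H jj).
      rewrite -E1 -E2 in hs.
      by move=> t e; split => h; [apply/(hs t e)/(IH' t e) | apply/(IH' t e)/(hs t e)].
  have -> : interp o b = c n.
    by rewrite /c; f_equal; apply: functional_extensionality => i; rewrite ltn_ord.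
  exact: step.
Qed.
End CgSat.

Lemma cg_sat (S : signature) (B : algebra S) (G : prel B) (P : B -> Prop) :
  (forall t (e : nat -> B) a b, G a b -> (P (eval (upd0 e a) t) <-> P (eval (upd0 e b) t))) ->
  Sat (Cg G) P.
Proof.
move=> H x y hxy.
have : PolQ P x y.
  apply: (Cg_min (PolQ_con P)) hxy => a b hab t e; exact: H.
by move=> /(_ (Var S 0) (fun _ => x)).
Qed.

Lemma sat_cg_con (S : signature) (B : algebra S) (th : prel B) (P : B -> Prop) :
  is_con th -> Sat th P ->
  (forall t (e : nat -> B) a b, th a b -> (P (eval (upd0 e a) t) <-> P (eval (upd0 e b) t))).
Proof.
move=> hth hs t e a b hab; apply: hs; apply: eval_con => // -[|i] //=; exact: con_refl.
Qed.

Lemma sat_join (S : signature) (B : algebra S) (th1 th2 : prel B) (P : B -> Prop) :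
  is_con th1 -> is_con th2 -> Sat th1 P -> Sat th2 P -> Sat (con_join th1 th2) P.
Proof.
move=> h1 h2 s1 s2; apply: cg_sat => t e a b [hab|hab].
- exact: sat_cg_con s1 t e a b hab.
- exact: sat_cg_con s2 t e a b hab.
Qed.



Lemma modl (S : signature) (Sigma : term S -> term S -> Prop) (B : algebra S) :
  con_modular_variety Sigma -> inV Sigma B ->
  forall a b c : prel B, is_con a -> is_con b -> is_con c -> subrel a c ->
  subrel (con_meet (con_join a b) c) (con_join a (con_meet b c)).
Proof. by move=> hm hB a b c ha hb hc hac x y /(hm B hB a b c ha hb hc hac). Qed.

Section Shift.
Variables (S : signature) (Sigma : term S -> term S -> Prop).
Hypothesis hmod : con_modular_variety Sigma.

Lemma shifting (B : algebra S) (hB : inV Sigma B) (al be ga : prel B) :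
  is_con al -> is_con be -> is_con ga ->
  (forall x y, al x y -> be x y -> ga x y) ->
  forall a b c d, al a c -> al b d -> be a b -> be c d -> ga a b -> ga c d.
Proof.
move=> hal hbe hga hmeet a b c d hac hbd hab hcd gab.
have hc := con_compat hbe.
have hS := inV_sub2 (hth := hc) hB.
pose p1 := @pr1 S B be hc. pose p2 := @pr2 S B be hc.
have hom1 : forall o (args : 'I_(sarity o) -> sub2 hc), p1 (interp o args) = interp o (fun i => p1 (args i)) by [].
have hom2 : forall o (args : 'I_(sarity o) -> sub2 hc), p2 (interp o args) = interp o (fun i => p2 (args i)) by [].
pose th0 := fun p q : sub2 hc => Delta (p1 p) (p1 q).
pose alb := con_meet (fun p q : sub2 hc => al (p1 p) (p1 q)) (fun p q => al (p2 p) (p2 q)).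
pose ka := fun p q : sub2 hc => ga (p2 p) (p2 q).
have c0 : is_con th0 by apply: pull_con hom1 (Delta_con B).
have ca : is_con alb by apply: meet_con; apply: pull_con.
have ck : is_con ka by apply: pull_con.
pose x := con_meet th0 ka.
have cx : is_con x by apply: meet_con.
pose scc := mk2 hc (con_refl hbe c). pose scd := mk2 hc hcd.
pose saa := mk2 hc (con_refl hbe a). pose sab := mk2 hc hab.
have J : con_join x alb scc scd.
  apply: (con_trans (join_con _ _) (y := saa)); first by apply: join_r; split; apply: (con_sym hal).
  apply: (con_trans (join_con _ _) (y := sab)); first by apply: join_l; split.

  by apply: join_r; split.
have M : con_meet (con_join x alb) th0 scc scd by split.
have K : subrel (con_join x (con_meet alb th0)) ka.
apply: join_min => //.
- by move=> p q [].
- move=> p q [[_ h2] h0]; apply: hmeet => //.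
  have hp := proj2_sig p; have hq := proj2_sig q.
  apply: (con_trans hbe (con_sym hbe hp)); rewrite /th0 /Delta /p1 /pr1 in h0.
  by rewrite h0.
exact: (K _ _ (modl hmod hS cx ca c0 (fun p q (h : x p q) => proj1 h) M)).
Qed.
End Shift.


Section Delta.
Variables (S : signature) (Sigma : term S -> term S -> Prop).
Hypothesis hmod : con_modular_variety Sigma.
Variables (B : algebra S) (hB : inV Sigma B).
Variables (al : prel B) (hal : is_con al).

Let hc := con_compat hal.
Definition RA := sub2 hc.
Let hR : inV Sigma RA := inV_sub2 (hth := hc) hB.
Definition q1 (p : RA) : B := pr1 p.
Definition q2 (p : RA) : B := pr2 p.
Definition diag (x : B) : RA := mk2 hc (con_refl hal x).
Lemma q1_hom o (args : 'I_(sarity o) -> RA) : q1 (interp o args) = interp o (fun i => q1 (args i)).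
Proof. by []. Qed.
Lemma q2_hom o (args : 'I_(sarity o) -> RA) : q2 (interp o args) = interp o (fun i => q2 (args i)).
Proof. by []. Qed.
Lemma qP (p : RA) : al (q1 p) (q2 p). Proof. exact: proj2_sig p. Qed.
Lemma q_eq (p q : RA) : q1 p = q1 q -> q2 p = q2 q -> p = q.
Proof. exact: sub2_eq. Qed.
Lemma eval_q1 (e : nat -> RA) t : q1 (eval e t) = eval (fun i => q1 (e i)) t.
Proof. exact: eval_pr1. Qed.
Lemma eval_q2 (e : nat -> RA) t : q2 (eval e t) = eval (fun i => q2 (e i)) t.
Proof. exact: eval_pr2. Qed.

Definition Dgen (be : prel B) : prel RA :=
  fun p q => be (q1 p) (q1 q) /\ q1 p = q2 p /\ q1 q = q2 q.
Definition Dl (be : prel B) : prel RA := Cg (Dgen be).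
Definition DD (de : prel B) : RA -> Prop := fun p => de (q1 p) (q2 p).
Definition lift1 (de : prel B) : prel RA := fun p q => de (q1 p) (q1 q).
Definition lift2 (de : prel B) : prel RA := fun p q => de (q2 p) (q2 q).

Lemma lift1_con de : is_con de -> is_con (lift1 de).
Proof. by move=> h; apply: pull_con h; apply: q1_hom. Qed.
Lemma lift2_con de : is_con de -> is_con (lift2 de).
Proof. by move=> h; apply: pull_con h; apply: q2_hom. Qed.

Lemma Dl_con be : is_con (Dl be). Proof. exact: Cg_con. Qed.

Lemma Dl_sub be : is_con be -> subrel (Dl be) (con_meet (lift1 be) (lift2 be)).
Proof.
move=> hbe; apply: Cg_min; first by apply: meet_con; [apply: lift1_con|apply: lift2_con].
by move=> p q [h [e1 e2]]; split => //; rewrite /lift2 -e1 -e2.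
Qed.

Lemma diag_gen be x y : be x y -> Dl be (diag x) (diag y).
Proof. by move=> h; apply: Cg_incl; split. Qed.

Lemma fact1a be de : is_con be -> is_con de -> centralizes be al de -> Sat (Dl be) (DD de).
Proof.
move=> hbe hde hcent; apply: cg_sat => t e a b [hab [ea eb]].
rewrite /DD !eval_q1 !eval_q2.
have E : forall (c : RA) (f : RA -> B), q1 c = q2 c -> (fun i => f (upd0 e c i)) = mix 1 (fun _ => f c) (fun i => f (e i)).
  by move=> c f _; apply: functional_extensionality => -[|i].
have Ea1 : (fun i => q1 (upd0 e a i)) = mix 1 (fun _ => q1 a) (fun i => q1 (e i)) by apply: E.
have Ea2 : (fun i => q2 (upd0 e a i)) = mix 1 (fun _ => q1 a) (fun i => q2 (e i)).
  by apply: functional_extensionality => -[|i] //=.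
have Eb1 : (fun i => q1 (upd0 e b i)) = mix 1 (fun _ => q1 b) (fun i => q1 (e i)) by apply: E.
have Eb2 : (fun i => q2 (upd0 e b i)) = mix 1 (fun _ => q1 b) (fun i => q2 (e i)).
  by apply: functional_extensionality => -[|i] //=.
rewrite Ea1 Ea2 Eb1 Eb2; split; apply: hcent => // i.
- exact: qP.
- exact: (con_sym hbe).
- exact: qP.
Qed.

Lemma fact1b be de : is_con be -> is_con de -> Sat (Dl be) (DD de) -> centralizes be al de.
Proof.
move=> hbe hde hs t m x y u v hx hu H.
pose E1 := fun i => if i < m then diag (x i) else mk2 hc (hu i).
pose E2 := fun i => if i < m then diag (y i) else mk2 hc (hu i).
have HE : Dl be (eval E1 t) (eval E2 t).
  apply: eval_con; first exact: Dl_con.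
  move=> i; rewrite /E1 /E2; case: ifP => _; first exact: diag_gen.
  exact: con_refl (Dl_con be) _.
have := hs _ _ HE; rewrite /DD !eval_q1 !eval_q2.
have -> : (fun i => q1 (E1 i)) = mix m x u by apply: functional_extensionality => i; rewrite /E1 /mix; case: ifP.
have -> : (fun i => q2 (E1 i)) = mix m x v by apply: functional_extensionality => i; rewrite /E1 /mix; case: ifP.
have -> : (fun i => q1 (E2 i)) = mix m y u by apply: functional_extensionality => i; rewrite /E2 /mix; case: ifP.
have -> : (fun i => q2 (E2 i)) = mix m y v by apply: functional_extensionality => i; rewrite /E2 /mix; case: ifP.
by case=> h _; apply: h.
Qed.

Lemma diag_hom o (xs : 'I_(sarity o) -> B) : diag (interp o xs) = interp o (fun i => diag (xs i)).
Proof. by apply: q_eq. Qed.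

Lemma Dl_join be1 be2 : is_con be1 -> is_con be2 ->
  subrel (Dl (con_join be1 be2)) (con_join (Dl be1) (Dl be2)).
Proof.
move=> h1 h2; set J := con_join (Dl be1) (Dl be2).
have cJ : is_con J by apply: join_con.
pose W := fun x y => J (diag x) (diag y).
have cW : is_con W.
  split; [|split; [|split]].
  - by move=> x; apply: (con_refl cJ).
  - by move=> x y; apply: (con_sym cJ).
  - by move=> x y z; apply: (con_trans cJ).
  - by move=> o a b H; rewrite /W !diag_hom; apply: (con_comp cJ).
have hW : subrel (con_join be1 be2) W.
  apply: join_min => // x y h; [apply: join_l|apply: join_r]; exact: diag_gen.
apply: Cg_min => // p q [h [ep eq]].
have -> : p = diag (q1 p) by apply: q_eq.
have -> : q = diag (q1 q) by apply: q_eq.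
exact: hW.
Qed.

Lemma cent_join_left be1 be2 de : is_con be1 -> is_con be2 -> is_con de ->
  centralizes be1 al de -> centralizes be2 al de -> centralizes (con_join be1 be2) al de.
Proof.
move=> h1 h2 hde c1 c2; apply: fact1b => //; first exact: join_con.
move=> p q hpq; apply: (sat_join (Dl_con _) (Dl_con _) (fact1a h1 hde c1) (fact1a h2 hde c2)).
exact: Dl_join.
Qed.

Lemma lemL be ga de : is_con be -> is_con ga -> is_con de -> subrel (Dl be) ga -> Sat ga (DD de) ->
  forall s s', ga s s' -> q1 s = q1 s' -> de (q2 s) (q2 s').
Proof.
move=> hbe hga hde hsub hs s s' hss e1.
have hzy : al (q2 s) (q2 s').
  apply: (con_trans hal (con_sym hal (qP s))); rewrite e1; exact: qP.
pose c := diag (q2 s). pose d := mk2 hc hzy.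
have : ga c d.
  apply: (@shifting S Sigma hmod RA hR (lift2 (@Delta B)) (lift1 (@Delta B)) ga _ _ _ _ s s' c d).
  - exact: lift2_con (Delta_con B).
  - exact: lift1_con (Delta_con B).
  - exact: hga.
  - move=> x y h2 h1; have -> : x = y by apply: q_eq.
    exact: con_refl.
  - by [].
  - by [].
  - exact: e1.
  - by [].
  - exact: hss.
move=> /hs; rewrite /DD /= => h; apply/h; exact: con_refl.
Qed.

Lemma cent_mono_de be de de' : is_con be -> is_con de -> is_con de' -> subrel de de' ->
  centralizes be al de -> centralizes be al de'.
Proof.
move=> hbe hde hde' hsub hcent.
have hs := fact1a hbe hde hcent.
have L := lemL hbe (Dl_con be) hde (fun x y h => h) hs.
have one : forall p q, Dl be p q -> DD de' p -> DD de' q.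
  move=> p q hpq hp.
  have hu : be (q1 p) (q1 q) by case: (Dl_sub hbe hpq).
  apply: (@shifting S Sigma hmod RA hR (Dl be) (lift1 (@Delta B)) (lift2 de') _ _ _ _ (diag (q1 p)) p (diag (q1 q)) q).
  - exact: Dl_con.
  - exact: lift1_con (Delta_con B).
  - exact: lift2_con.
  - by move=> x y h1 h2; apply: hsub; apply: L.
  - exact: diag_gen.
  - exact: hpq.
  - by [].
  - by [].
  - exact: hp.
apply: fact1b => // p q hpq; split; first exact: one.
by apply: one; apply: con_sym (Dl_con be) _ _ hpq.
Qed.

Lemma lemS be d0 : is_con be -> is_con d0 -> subrel d0 al -> Sat (Dl be) (DD d0) ->
  forall P Q, Dl be P Q -> d0 (q1 P) (q1 Q) -> d0 (q2 P) (q2 Q).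
Proof.
move=> hbe hd0 hsub hs P Q hPQ h1.
pose dh := con_meet (lift1 d0) (lift2 d0).
have cdh : is_con dh by apply: meet_con; [apply: lift1_con|apply: lift2_con].
pose D' := con_join (Dl be) dh.
have cD' : is_con D' by apply: join_con.
have sD' : Sat D' (DD d0).
  apply: sat_join => //; first exact: Dl_con.
  move=> x y [hx1 hx2]; rewrite /DD; split => h.
  - apply: (con_trans hd0 (con_sym hd0 hx1)); exact: (con_trans hd0 h hx2).
  - apply: (con_trans hd0 hx1); exact: (con_trans hd0 h (con_sym hd0 hx2)).
have L' := lemL hbe cD' hd0 (join_l (a := Dl be) (b := dh)) sD'.
have hr : al (q1 P) (q2 Q) by apply: (con_trans hal (hsub _ _ h1)); exact: qP.
pose r := mk2 hc hr.
pose eta0 := lift1 (@Delta B).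
have c0 : is_con eta0 by apply: lift1_con (Delta_con B).
have J : con_join dh eta0 P Q.
  apply: (con_trans (join_con _ _) (y := r)); first by apply: join_r.
  by apply: join_l; split => //; apply: con_refl.
have M : con_meet (con_join dh eta0) D' P Q by split => //; apply: join_l.
have := modl hmod hR cdh c0 cD' (join_r (a := Dl be) (b := dh)) M.
apply: (join_min (lift2_con hd0)).
- by move=> x y [].
- by move=> x y [e hx]; apply: L'.
Qed.

Lemma cent_sym be d0 : is_con be -> is_con d0 -> subrel d0 al ->
  centralizes be al d0 -> centralizes al be d0.
Proof.
move=> hbe hd0 hsub hcent t m x y u v hx hu H.
have hs := fact1a hbe hd0 hcent.
pose E1 := fun i => if i < m then mk2 hc (hx i) else diag (u i).
pose E2 := fun i => if i < m then mk2 hc (hx i) else diag (v i).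
have HE : Dl be (eval E1 t) (eval E2 t).
  apply: eval_con; first exact: Dl_con.
  move=> i; rewrite /E1 /E2; case: ifP => _; last exact: diag_gen.
  exact: con_refl (Dl_con be) _.
have := lemS hbe hd0 hsub hs HE; rewrite !eval_q1 !eval_q2.
have -> : (fun i => q1 (E1 i)) = mix m x u by apply: functional_extensionality => i; rewrite /E1 /mix; case: ifP.
have -> : (fun i => q2 (E1 i)) = mix m y u by apply: functional_extensionality => i; rewrite /E1 /mix; case: ifP.
have -> : (fun i => q1 (E2 i)) = mix m x v by apply: functional_extensionality => i; rewrite /E2 /mix; case: ifP.
have -> : (fun i => q2 (E2 i)) = mix m y v by apply: functional_extensionality => i; rewrite /E2 /mix; case: ifP.
by apply.
Qed.
End Delta.


Section Key.
Variables (S : signature) (Sigma : term S -> term S -> Prop).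
Hypothesis hmod : con_modular_variety Sigma.
Variables (B : algebra S) (hB : inV Sigma B).

Lemma comm_sym (a b : prel B) : is_con a -> is_con b -> subrel (comm a b) (comm b a).
Proof.
move=> ha hb; apply: comm_min; first exact: comm_con.
apply: (cent_sym hmod hB ha hb (comm_con b a) (@comm_le_r S B b a ha)).
exact: comm_cent.
Qed.

Lemma cent_of_comm (a b d : prel B) : is_con a -> is_con b -> is_con d ->
  subrel (comm a b) d -> centralizes a b d.
Proof.
move=> ha hb hd hs.
apply: (cent_mono_de hmod hB hb ha (comm_con a b) hd hs); exact: comm_cent.
Qed.

Lemma key (a b ph : prel B) : is_con a -> is_con b -> is_con ph ->
  subrel (comm a b) ph -> subrel (comm (con_join ph a) (con_join ph b)) ph.
Proof.
move=> ha hb hph hs.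
have c1 : centralizes b a ph.
  apply: cent_of_comm => // x y h; apply: hs; exact: comm_sym.
have c2 : centralizes (con_join ph b) a ph.
  apply: (cent_join_left ha hph hb hph _ c1); exact: cent_left_self.
have c3 : centralizes a (con_join ph b) ph.
  apply: cent_of_comm => //; first exact: join_con.
  move=> x y h; apply: (comm_min hph c2); apply: comm_sym => //; exact: join_con.
have c4 : centralizes (con_join ph a) (con_join ph b) ph.
  apply: (cent_join_left (join_con _ _) hph ha hph _ c3); exact: cent_left_self.
exact: comm_min.
Qed.
End Key.


Section Bool.
Variables (S : signature) (Sigma : term S -> term S -> Prop).
Hypothesis hmod : con_modular_variety Sigma.
Hypothesis hsd : semidegenerate Sigma.
Variables (A : algebra S) (hA : inV Sigma A) (a0 : A).

Lemma bool_idem (be ga : prel A) : is_con be -> is_con ga ->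
  releq (con_join be ga) (@Nabla A) -> releq (con_meet be ga) (@Delta A) ->
  subrel be (comm be be).
Proof.
move=> hbe hga hj hm.
set de := comm be be.
have hde : is_con de by apply: comm_con.
have hdb : subrel de be by apply: comm_le_l.
have hR : inV Sigma (RA hbe) by apply: inV_sub2.
have s1 : Sat (@Dl S A be hbe be) (@DD S A be hbe de) by apply: fact1a => //; apply: comm_cent.
pose gh := con_meet (@lift1 S A be hbe ga) (@lift2 S A be hbe ga).
have cgh : is_con gh by apply: meet_con; [apply: lift1_con|apply: lift2_con].
have one : forall p q, gh p q -> @DD S A be hbe de p -> @DD S A be hbe de q.
  move=> p q [g1 g2] hp.
  have J : con_join de ga (q1 q) (q2 q).
    apply: (con_trans (join_con _ _) (y := q1 p)); first by apply: join_r; apply: (con_sym hga).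
    apply: (con_trans (join_con _ _) (y := q2 p)); first by apply: join_l.
    by apply: join_r.
  have M : con_meet (con_join de ga) be (q1 q) (q2 q) by split => //; apply: qP.
  have := modl hmod hA hde hga hbe hdb M.
  apply: join_min => // x y [h1 h2].
  have : @Delta A x y by apply/hm.
  by move=> ->; apply: con_refl.
have s2 : Sat gh (@DD S A be hbe de).
  move=> p q h; split; first exact: one.
  by apply: one; apply: (con_sym cgh).
pose Th := con_join (@Dl S A be hbe be) gh.
have cTh : is_con Th by apply: join_con.
have s3 : Sat Th (@DD S A be hbe de) by apply: sat_join => //; apply: Dl_con.
pose W := fun x y => Th (diag hbe x) (diag hbe y).
have cW : is_con W.
  split; [|split; [|split]].
  - by move=> x; apply: (con_refl cTh).
  - by move=> x y; apply: (con_sym cTh).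
  - by move=> x y z; apply: (con_trans cTh).
  - by move=> o a b H; rewrite /W !diag_hom; apply: (con_comp cTh).
have hW : forall x y, W x y.
  move=> x y; apply: (join_min cW) (proj2 (hj x y) I).
  - by move=> u v h; apply: join_l; apply: diag_gen.
  - by move=> u v h; apply: join_r; split.
have all : forall p q, Th p q.
  apply: (sd_quot hsd hR cTh (b := diag hbe a0)) => o.
  rewrite -diag_hom; exact: hW.
move=> x y hxy.
pose p := mk2 (con_compat hbe) hxy.
have := s3 (diag hbe x) p (all _ _).
rewrite /DD /= => h; apply/h; exact: con_refl.
Qed.

Lemma bool_iter (be ga : prel A) n : is_con be -> is_con ga ->
  releq (con_join be ga) (@Nabla A) -> releq (con_meet be ga) (@Delta A) ->
  releq (comm_iter n be) be.
Proof.
move=> hbe hga hj hm.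
have hi := bool_idem hbe hga hj hm.
elim: n => [|n IH] //= x y; split.
- move=> h; apply/IH; apply: comm_le_l (h); exact: comm_iter_con.
- move=> h; apply: (comm_mono (a := comm_iter n be) (b := comm_iter n be) (a' := be) (b' := be)).
  + by move=> u v /IH.
  + by move=> u v /IH.
  + exact: hi.
Qed.
End Bool.


Lemma fchoice (I X : Type) (P : I -> X -> Prop) : (forall i, exists x, P i x) -> exists f, forall i, P i (f i).
Proof.
move=> H; exists (fun i => proj1_sig (constructive_indefinite_description _ (H i))) => i.
exact: proj2_sig (constructive_indefinite_description _ (H i)).
Qed.

Definition big_list (X : Type) (n : nat) (L : 'I_n -> list X) : list X :=
  foldr (fun i acc => List.app (L i) acc) nil (enum 'I_n).

Lemma big_list_incl (X : Type) (n : nat) (L : 'I_n -> list X) i : List.incl (L i) (big_list L).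
Proof.
rewrite /big_list.
have : i \in enum 'I_n by rewrite mem_enum.
elim: (enum 'I_n) => [|j s IH] //=.
rewrite inE => /orP [/eqP ->|/IH h].
- by move=> x hx; apply: List.in_or_app; left.
- by move=> x hx; apply: List.in_or_app; right; apply: h.
Qed.

Lemma big_list_in (X : Type) (n : nat) (L : 'I_n -> list X) x :
  List.In x (big_list L) -> exists i, List.In x (L i).
Proof.
rewrite /big_list; elim: (enum 'I_n) => [|j s IH] //=.
move=> hin; case: (List.in_app_or _ _ _ hin) => h; [by exists j | exact: IH].
Qed.

Lemma big_incl (X : Type) (n : nat) (L : 'I_n -> list X) : exists M, forall i, List.incl (L i) M.
Proof. by exists (big_list L) => i; apply: big_list_incl. Qed.

Definition CgL (S : signature) (B : algebra S) (l : list (B * B)) : prel B :=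
  Cg (fun x y => List.In (x, y) l).

Lemma CgL_mono (S : signature) (B : algebra S) (l l' : list (B * B)) :
  List.incl l l' -> subrel (CgL l) (CgL l').
Proof. by move=> h; apply: Cg_mono => x y /h. Qed.

Lemma incl_appl (X : Type) (l1 l2 m : list X) : List.incl (List.app l1 l2) m -> List.incl l1 m.
Proof. by move=> h x hx; apply: h; by apply: List.in_or_app; left. Qed.
Lemma incl_appr (X : Type) (l1 l2 m : list X) : List.incl (List.app l1 l2) m -> List.incl l2 m.
Proof. by move=> h x hx; apply: h; by apply: List.in_or_app; right. Qed.
Lemma incl_trans' (X : Type) (l1 l2 m : list X) : List.incl l1 l2 -> List.incl l2 m -> List.incl l1 m.
Proof. by move=> h1 h2 x /h1 /h2. Qed.

Section Compact.
Variables (S : signature) (Sigma : term S -> term S -> Prop).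
Hypothesis hmod : con_modular_variety Sigma.
Hypothesis hsd : semidegenerate Sigma.
Variables (A : algebra S) (hA : inV Sigma A) (a0 : A).

Lemma nabla_compact : compact (@Nabla A).
Proof.
apply: NNPP => H.
have gex : forall l : list (A * A), exists z, ~ CgL l a0 z.
  move=> l; apply: NNPP => H1; apply: H; exists l => x y; split => // _.
  have hx : CgL l a0 x by apply: NNPP => h; apply: H1; exists x.
  have hy : CgL l a0 y by apply: NNPP => h; apply: H1; exists y.
  exact: (con_trans (Cg_con _) (con_sym (Cg_con _) hx) hy).
have [g hg] := fchoice gex.
pose P := prodA (list (A * A)) A.
have hP : inV Sigma P by apply: inV_prod.
pose Phi := fun f h : P => exists l0, forall l, List.incl l0 l -> CgL l (f l) (h l).
have cPhi : is_con Phi.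
  split; [|split; [|split]].
  - by move=> f; exists nil => l _; apply: con_refl (Cg_con _) _.
  - by move=> f h [l0 H0]; exists l0 => l hl; apply: (con_sym (Cg_con _)); apply: H0.
  - move=> f h k [l0 H0] [l1 H1]; exists (List.app l0 l1) => l hl.
    apply: (con_trans (Cg_con _) (H0 l (incl_appl hl))); exact: H1 l (incl_appr hl).
  - move=> o a b Hab.
    have [L hL] := fchoice Hab.
    have [M hM] := big_incl L.
    exists M => l hl; apply: (con_comp (Cg_con _)) => i /=.
    apply: (hL i); exact: incl_trans' (hM i) hl.
have all := sd_quot hsd hP cPhi (b := fun _ => a0).
have [l0 H0] : Phi (fun _ => a0) g.
  apply: all => o.
  exists [:: (interp o (fun _ => a0), a0)] => l hl /=.
  by apply: Cg_incl; apply: hl; left.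
exact: hg l0 (H0 l0 (fun x h => h)).
Qed.

Lemma compl_compact (a b : prel A) : is_con a -> is_con b ->
  releq (con_join a b) (@Nabla A) -> releq (con_meet a b) (@Delta A) -> compact a.
Proof.
move=> ha hb hj hm.
have [l hl] := nabla_compact.
pose Rl := fun x y => exists La Lb : list (A * A),
  (forall u v, List.In (u, v) La -> a u v) /\ (forall u v, List.In (u, v) Lb -> b u v) /\
  con_join (CgL La) (CgL Lb) x y.
have cR : is_con Rl.
  split; [|split; [|split]].
  - by move=> x; exists nil, nil; split => //; split => //; apply: con_refl (join_con _ _) _.
  - move=> x y [La [Lb [h1 [h2 h3]]]]; exists La, Lb; split => //; split => //.
    exact: con_sym (join_con _ _) _ _ h3.
  - move=> x y z [La [Lb [h1 [h2 h3]]]] [La' [Lb' [h1' [h2' h3']]]].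
    exists (List.app La La'), (List.app Lb Lb'); split; [|split].
    + by move=> u v /(List.in_app_or _ _ _) [/h1|/h1'].
    + by move=> u v /(List.in_app_or _ _ _) [/h2|/h2'].
    + apply: (con_trans (join_con _ _) (y := y)).
      * move: h3; apply: join_mono; apply: CgL_mono => w hw; by apply: List.in_or_app; left.
      * move: h3'; apply: join_mono; apply: CgL_mono => w hw; by apply: List.in_or_app; right.
  - move=> o x y H.
    have H' : forall i, exists p : list (A * A) * list (A * A),
      (forall u v, List.In (u, v) p.1 -> a u v) /\ (forall u v, List.In (u, v) p.2 -> b u v) /\
      con_join (CgL p.1) (CgL p.2) (x i) (y i).
      by move=> i; have [La [Lb h]] := H i; exists (La, Lb).
    have [L hL] := fchoice H'.
    exists (big_list (fun i => (L i).1)), (big_list (fun i => (L i).2)); split; [|split].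
    + move=> u v hin; case: (big_list_in hin) => i hi; case: (hL i) => h _; exact: h.
    + move=> u v hin; case: (big_list_in hin) => i hi; case: (hL i) => _ [h _]; exact: h.
    + apply: (con_comp (join_con _ _)) => i.
      case: (hL i) => _ [_ h]; move: h; apply: join_mono; apply: CgL_mono; exact: big_list_incl.
  have haR : subrel a Rl.
    move=> x y h; exists [:: (x, y)], nil; split; [|split].
    + by move=> u v [[<- <-]|].
    + by [].
    + by apply: join_l; apply: Cg_incl; left.
  have hbR : subrel b Rl.
    move=> x y h; exists nil, [:: (x, y)]; split; [|split].
    + by [].
    + by move=> u v [[<- <-]|].
    + by apply: join_r; apply: Cg_incl; left.
  have hjR : subrel (con_join a b) Rl by apply: join_min.
  have comb : forall l' : list (A * A), (forall u v, List.In (u, v) l' -> Rl u v) ->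
    exists La Lb : list (A * A),
    (forall u v, List.In (u, v) La -> a u v) /\ (forall u v, List.In (u, v) Lb -> b u v) /\
    (forall u v, List.In (u, v) l' -> con_join (CgL La) (CgL Lb) u v).
    elim => [|[u0 v0] l' IH] hl'.
    - by exists nil, nil.
    - have [La [Lb [h1 [h2 h3]]]] := IH (fun u v h => hl' u v (or_intror h)).
      have [La' [Lb' [h1' [h2' h3']]]] := hl' u0 v0 (or_introl erefl).
      exists (List.app La La'), (List.app Lb Lb'); split; [|split].
      + by move=> u v /(List.in_app_or _ _ _) [/h1|/h1'].
      + by move=> u v /(List.in_app_or _ _ _) [/h2|/h2'].
      + move=> u v [[<- <-]|hin].
        * move: h3'; apply: join_mono; apply: CgL_mono => w hw; by apply: List.in_or_app; right.
        * move: (h3 u v hin); apply: join_mono; apply: CgL_mono => w hw; by apply: List.in_or_app; left.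
  have [La [Lb [h1 [h2 h3]]]] := comb l (fun u v _ => hjR u v (proj2 (hj u v) I)).
  have hLa : subrel (CgL La) a by apply: Cg_min.
  exists La => x y; split; last exact: hLa.
  move=> hxy.
  have hN : con_join (CgL La) (CgL Lb) x y.
    have : Cg (fun u v => List.In (u, v) l) x y by apply/hl.
    by apply: Cg_min => //; apply: join_con.
  have M : con_meet (con_join (CgL La) (CgL Lb)) a x y by split.
  have := modl hmod hA (Cg_con _) (Cg_con _) ha hLa M.
  apply: join_min => //; first exact: Cg_con.
  move=> u v [hu1 hu2].
  have : @Delta A u v by apply/hm; split => //; apply: (Cg_min hb h2).
  by move=> ->; apply: con_refl (Cg_con _) _.
Qed.
End Compact.


Lemma in_In (T : eqType) (x : T) (s : seq T) : x \in s -> List.In x s.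
Proof. by elim: s => [|y s IH] //=; rewrite inE => /orP [/eqP ->|/IH]; auto. Qed.

Lemma chain_fin (T X : Type) (R : T -> T -> Prop) (C : T -> Prop) (Q : X -> T -> Prop) (s0 : T) :
  C s0 -> (forall s t, C s -> C t -> R s t \/ R t s) ->
  (forall x s t, R s t -> Q x s -> Q x t) ->
  forall l : list X, (forall x, List.In x l -> exists s, C s /\ Q x s) ->
  exists s, C s /\ forall x, List.In x l -> Q x s.
Proof.
move=> h0 htot hmono; elim => [|x l IH] hl; first by exists s0.
have [s [hs hq]] := IH (fun y h => hl y (or_intror h)).
have [t [ht hqt]] := hl x (or_introl erefl).
case: (htot s t hs ht) => hst.
- exists t; split => // y [<-|hy] //; exact: hmono hst (hq y hy).
- exists s; split => // y [<-|hy]; [exact: hmono hst hqt | exact: hq].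
Qed.

Section Primes.
Variables (S : signature) (Sigma : term S -> term S -> Prop).
Hypothesis hmod : con_modular_variety Sigma.
Variables (A : algebra S) (hA : inV Sigma A).
Hypothesis hK : forall a b : prel A, is_con a -> is_con b -> compact a -> compact b -> compact (comm a b).

Lemma prime_exists (al th : prel A) : is_con al -> is_con th -> compact th ->
  (forall n, ~ subrel (comm_iter n th) al) ->
  exists p, prime_con p /\ subrel al p /\ ~ subrel th p.
Proof.
move=> hal hth hcth hno.
pose F := fun ph : prel A => is_con ph /\ subrel al ph /\ forall n, ~ subrel (comm_iter n th) ph.
pose T := {ph : prel A | F ph}.
pose R := fun s t : T => boolp.asbool (subrel (proj1_sig s) (proj1_sig t)).
have RP : forall s t, R s t <-> subrel (proj1_sig s) (proj1_sig t).
  by move=> s t; split => [/boolp.asboolP|h]; [|apply/boolp.asboolP].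
have [t tmax] : exists t, forall s, R t s -> s = t.
  apply: classical_sets.Zorn.
  - by move=> s; apply/RP.
  - by move=> r s t /RP h1 /RP h2; apply/RP => x y /h1 /h2.
  - move=> s t /RP h1 /RP h2; apply: sig_eq.
    apply: functional_extensionality => x; apply: functional_extensionality => y.
    by apply: propositional_extensionality; split; [apply: h1|apply: h2].
  - move=> C hC.
    case: (classic (exists s0, C s0)) => [[s0 hs0]|hne]; last first.
      exists (exist _ al (conj hal (conj (fun x y h => h) hno))) => s hs.
      by exfalso; apply: hne; exists s.
    have htot : forall s t, C s -> C t -> subrel (proj1_sig s) (proj1_sig t) \/ subrel (proj1_sig t) (proj1_sig s).
      by move=> s t hs ht; case: (hC s t hs ht) => /RP h; [left|right].
    pose U := fun x y => exists s, C s /\ proj1_sig s x y.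
    have cs : forall s : T, is_con (proj1_sig s) by move=> s; case: (proj2_sig s).
    have cU : is_con U.
      split; [|split; [|split]].
      - by move=> x; exists s0; split => //; apply: con_refl.
      - by move=> x y [s [hs h]]; exists s; split => //; apply: con_sym.
      - move=> x y z [s [hs h1]] [s' [hs' h2]].
        case: (htot s s' hs hs') => hss.
        + by exists s'; split => //; apply: (con_trans (cs s')) h2; apply: hss.
        + by exists s; split => //; apply: (con_trans (cs s) h1); apply: hss.
      - move=> o a b H.
        have [s [hs hq]] := @chain_fin T 'I_(sarity o) (fun s t => subrel (proj1_sig s) (proj1_sig t)) C
          (fun i s => proj1_sig s (a i) (b i)) s0 hs0 htot (fun i s t h q => h _ _ q)
          (enum 'I_(sarity o)) (fun i _ => H i).
        exists s; split => //; apply: (con_comp (cs s)) => i; apply: hq; apply: in_In; exact: mem_enum.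
    have FU : F U.
      split => //; split.
      - by move=> x y h; exists s0; split => //; case: (proj2_sig s0) => _ [hs _]; apply: hs.
      - move=> n hn.
        have [l hl] := comm_iter_compact n hK hth hcth.
        have hpair : forall p : A * A, List.In p l -> List.In (p.1, p.2) l by case.
        have hall : forall p, List.In p l -> exists s, C s /\ proj1_sig s p.1 p.2.
          move=> p hp; apply: hn; apply/hl; apply: Cg_incl; exact: hpair.
        have [s [hs hq]] := @chain_fin T (A * A) (fun s t => subrel (proj1_sig s) (proj1_sig t)) C
          (fun p s => proj1_sig s p.1 p.2) s0 hs0 htot (fun p s t h q => h _ _ q) l hall.
        case: (proj2_sig s) => _ [_ hs'].
        apply: (hs' n) => x y /hl; apply: Cg_min; first exact: cs.
        by move=> u v huv; apply: (hq (u, v)).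
    exists (exist _ U FU) => s hs; apply/RP => x y h; by exists s.
case: (proj2_sig t) => ct [halt hnot].
set ph := proj1_sig t in ct halt hnot tmax *.
exists ph; split; last split => //; last by move/(hnot 0).
split => //; split.
- by move=> hN; apply: (hnot 0) => x y _; apply/hN.
- move=> a b ha hb hab; apply: NNPP => hn.
  have [hna hnb] : ~ subrel a ph /\ ~ subrel b ph by split => h; apply: hn; [left|right].
  have ext : forall c, is_con c -> ~ subrel c ph -> exists i, subrel (comm_iter i th) (con_join ph c).
    move=> c hc hnc; apply: NNPP => hne.
    have Fc : F (con_join ph c).
      split; first exact: join_con.
      split; first by move=> x y h; apply: join_l; apply: halt.
      by move=> n hn'; apply: hne; exists n.
    have := tmax (exist _ _ Fc).
    have hR : R t (exist _ _ Fc) by apply/RP => x y h; apply: join_l.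
    move=> /(_ hR) /(f_equal (@proj1_sig _ _)) /= E.
    by apply: hnc => x y h; rewrite /ph -E; apply: join_r.
  have [i hi] := ext a ha hna.
  have [j hj] := ext b hb hnb.
  apply: (hnot (maxn i j).+1) => x y /= h.
  have hc := comm_iter_con (maxn i j) hth.
  apply: (key hmod hA ha hb ct hab).
  apply: comm_mono h.
  - by move=> u v /(comm_iter_anti hth (leq_maxl i j)) /hi.
  - by move=> u v /(comm_iter_anti hth (leq_maxr i j)) /hj.
Qed.

Lemma radical (al th : prel A) : is_con al -> is_con th -> compact th ->
  subrel th (rho al) -> exists n, subrel (comm_iter n th) al.
Proof.
move=> hal hth hc hsub; apply: NNPP => hne.
have [p [hp [hap hnp]]] := prime_exists hal hth hc (fun n h => hne (ex_intro _ n h)).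
by apply: hnp => x y /hsub; apply.
Qed.
End Primes.


Lemma rho_releq' (S : signature) (B : algebra S) (a b : prel B) : releq a b -> Leq a b.
Proof. exact: rho_releq. Qed.

Lemma join_releq (S : signature) (B : algebra S) (a b a' b' : prel B) :
  releq a a' -> releq b b' -> releq (con_join a b) (con_join a' b').
Proof. by move=> h1 h2 x y; split; apply: join_mono => u v h; by [apply/h1|apply/h2]. Qed.

Theorem proposition4p4 (S : signature) (Sigma : term S -> term S -> Prop)
  (A : algebra S) :
  con_modular_variety Sigma -> semidegenerate Sigma -> inV Sigma A ->
  inhabited A ->
  (forall a b : prel A, is_con a -> is_con b -> compact a -> compact b ->
     compact (comm a b)) ->
  (lamB_boolean_iso A <-> lamB_surjective A) /\
  (lamB_surjective A <->
     (forall a : prel A, is_con a -> compact a -> in_BL (lam a) ->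
        exists n : nat, in_BCon (comm_iter n a))) /\
  ((forall a : prel A, is_con a -> compact a -> in_BL (lam a) ->
        exists n : nat, in_BCon (comm_iter n a)) <->
   (forall a : prel A, is_con a -> compact a ->
        (in_BL (lam a) <-> exists n : nat, in_BCon (comm_iter n a)))).
Proof.
move=> hmod hsd hA [a0] hK.
have bcompact : forall a : prel A, in_BCon a -> compact a.
  move=> a [ha [b [hb [hj hm]]]]; exact (compl_compact hmod hsd hA a0 ha hb hj hm).
have bcompl : forall a : prel A, in_BCon a -> exists b, in_BCon b /\ is_con b /\
    releq (con_join a b) (@Nabla A) /\ releq (con_meet a b) (@Delta A).
  move=> a [ha [b [hb [hj hm]]]]; exists b; split; last by [].
  split => //; exists a; split => //; split.
  - by move=> x y; rewrite -hj; split; apply: join_comm.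
  - by move=> x y; rewrite -hm; split => -[].
have biter : forall (a : prel A) n, in_BCon a -> releq (comm_iter n a) a.
  move=> a n [ha [b [hb [hj hm]]]]; exact (bool_iter hmod hsd hA a0 n ha hb hj hm).
have bBL : forall a : prel A, in_BCon a -> in_BL (lam a).
  move=> a hba; have [b [hbb [hb [hj hm]]]] := bcompl a hba.
  exists b; split => //; split; first exact: bcompact.
  split; first exact: rho_releq.
  apply: rho_releq => x y; split.
  - move=> h; apply/hm; split; [apply: comm_le_l h | apply: comm_le_r h] => //; by case: hba.
  - by move=> ->; apply: con_refl; apply: comm_con.
have bcon : forall a : prel A, in_BCon a -> is_con a by move=> a [].
have BCon_releq : forall a b : prel A, is_con b -> releq a b -> in_BCon a -> in_BCon b.
  move=> a b hb hab [ha [c [hc [hj hm]]]]; split => //; exists c; split => //; split.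
  - move=> x y; rewrite -hj; apply: join_releq => u v; [symmetry; exact: hab | by []].
  - by move=> x y; rewrite -hm; split => -[h1 h2]; split => //; apply/hab.
have s23 : lamB_surjective A ->
    (forall a : prel A, is_con a -> compact a -> in_BL (lam a) -> exists n, in_BCon (comm_iter n a)).
  move=> hs al hal hcal hbl.
  have [be [hbe hL]] := hs al hal hcal hbl.
  have cbe := bcon _ hbe.
  have [m hm] := radical hmod hA hK hal cbe (bcompact _ hbe) (fun x y h => proj1 (hL x y) (rho_incl h)).
  have hba : subrel be al by move=> x y /(biter be m hbe) /hm.
  have [n hn] := radical hmod hA hK cbe hal hcal (fun x y h => proj2 (hL x y) (rho_incl h)).
  exists n; apply: (BCon_releq be) => //; first exact: comm_iter_con.
  move=> x y; split; last exact: hn.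
  by move=> /(biter be n hbe) h; apply: comm_iter_mono h.
have s32 : (forall a : prel A, is_con a -> compact a -> in_BL (lam a) -> exists n, in_BCon (comm_iter n a)) ->
    lamB_surjective A.
  move=> h3 x hx hcx hbl; have [n hn] := h3 x hx hcx hbl.
  by exists (comm_iter n x); split => //; apply: rho_iter.
split; [|split; [by split|]].
- split; first by case=> _ [_ [_ [_ [_ h]]]].
  move=> hs; split; first by move=> a ha; split; [apply: bcompact|apply: bBL].
  split.
    move=> a b ha hb; split; first by move=> x y.
    move=> x y; rewrite /lam /Lmeet; symmetry; apply: rho_comm_meet; exact: bcon.
  split; first by move=> x y.
  split; first by move=> x y.
  split; last exact: hs.
  have half : forall a b : prel A, in_BCon a -> in_BCon b -> Leq (lam a) (lam b) -> subrel a b.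
    move=> a b ha hb hab.
    have [n hn] := radical hmod hA hK (bcon _ hb) (bcon _ ha) (bcompact _ ha)
      (fun x y h => proj1 (hab x y) (rho_incl h)).
    by move=> x y /(biter a n ha) /hn.
  move=> a b ha hb hab x y; split; first exact: (half a b ha hb hab).
  by apply: (half b a hb ha) => u v; symmetry; apply: hab.
- split.
  + move=> h3 a ha hca; split; first exact: h3.
    move=> [n hn].
    set be := comm_iter n a in hn.
    have [ga [hbga [hga [hj hm]]]] := bcompl be hn.
    have hbe : is_con be by apply: comm_iter_con.
    have hbea : subrel be a by apply: (comm_iter_anti ha (leq0n n)).
    exists ga; split => //; split; first exact: bcompact.
    split.
    * move=> x y; split => _; first exact: rho_Nabla.
      move=> p [hp [hpn _]] hsub; exfalso; apply: hpn => u v; split => // _.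
      apply: hsub; rewrite /Ljoin /lam.
      apply: (join_mono (a := be) (b := ga) (a' := a) (b' := ga) hbea (fun _ _ h => h)).
      by apply/hj.
    * move=> x y; rewrite /Lmeet /lam /Lbot.
      rewrite (rho_comm_meet ha hga x y) (rho_meet ha hga x y).
      rewrite -(rho_releq hm x y) (rho_meet hbe hga x y).
      by rewrite /con_meet (rho_iter n ha x y).
  + by move=> h4 a ha hca hbl; apply/(h4 a ha hca).
Qed.
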